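(* The space $R^\natural(S^1\times D^2,A_1)$ is homeomorphic to $S^3=\{(z_1,z_2)\in\mathbb{C}^2:|z_1|^2+|z_2|^2=1\}$, via the map sending $(z_1,z_2)$ to the class of $$a=i\sigma_z,\ b=a^{-1},\ A=\begin{pmatrix} z_1&-\bar z_2\\ z_2&\bar z_1\end{pmatrix},\ B=1,\ h=i\sigma_x,\ w=-1.$$ All classes in $R^\natural(S^1\times D^2,A_1)$ are nonabelian.
   Context: Pauli matrices standard. $R^\natural(S^1\times D^2,A_1)$ is the traceless character variety of the solid torus minus an unknotted arc $A_1$, a small meridional loop $H$ around $A_1$, and an arc $W$ joining $A_1$ to $H$, whose fundamental group is $\langle A,B,a,b,h,w\mid hwa=ah,\ b=a^{-1},\ B=1\rangle$. Concretely, it is the space of tuples $(A,B,a,b,h,w)\in SU(2)^6$ with $\operatorname{tr}a=\operatorname{tr}h=0$, $w=-1$, $hwa=ah$, $b=a^{-1}$, $B=1$, modulo simultaneous conjugation, with quotient topology. A class is nonabelian if the matrices of a representative do not all pairwise commute. *)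

(* Defs.v *)
From Stdlib Require Import Reals.
Open Scope R_scope.

Definition C := (R * R)%type.
Definition C0 : C := (0, 0).
Definition C1 : C := (1, 0).
Definition Ci : C := (0, 1).
Definition Cadd (z w : C) : C := (fst z + fst w, snd z + snd w).
Definition Copp (z : C) : C := (- fst z, - snd z).
Definition Cmul (z w : C) : C :=
  (fst z * fst w - snd z * snd w, fst z * snd w + snd z * fst w).
Definition Cconj (z : C) : C := (fst z, - snd z).
Definition Cnorm2 (z : C) : R := fst z * fst z + snd z * snd z.
Definition Cdist (z w : C) : R := Rabs (fst z - fst w) + Rabs (snd z - snd w).

Record M2 := mkM2 { m11 : C; m12 : C; m21 : C; m22 : C }.
Definition Mmul (X Y : M2) : M2 :=
  mkM2 (Cadd (Cmul (m11 X) (m11 Y)) (Cmul (m12 X) (m21 Y)))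
       (Cadd (Cmul (m11 X) (m12 Y)) (Cmul (m12 X) (m22 Y)))
       (Cadd (Cmul (m21 X) (m11 Y)) (Cmul (m22 X) (m21 Y)))
       (Cadd (Cmul (m21 X) (m12 Y)) (Cmul (m22 X) (m22 Y))).
Definition Madj (X : M2) : M2 :=
  mkM2 (Cconj (m11 X)) (Cconj (m21 X)) (Cconj (m12 X)) (Cconj (m22 X)).
Definition Mid : M2 := mkM2 C1 C0 C0 C1.
Definition Mneg (X : M2) : M2 :=
  mkM2 (Copp (m11 X)) (Copp (m12 X)) (Copp (m21 X)) (Copp (m22 X)).
Definition Mdet (X : M2) : C :=
  Cadd (Cmul (m11 X) (m22 X)) (Copp (Cmul (m12 X) (m21 X))).
Definition Mtr (X : M2) : C := Cadd (m11 X) (m22 X).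
Definition Mdist (X Y : M2) : R :=
  Cdist (m11 X) (m11 Y) + Cdist (m12 X) (m12 Y)
  + Cdist (m21 X) (m21 Y) + Cdist (m22 X) (m22 Y).

Definition SU2 (X : M2) : Prop := Mmul X (Madj X) = Mid /\ Mdet X = C1.

Definition iSigmaZ : M2 := mkM2 Ci C0 C0 (Copp Ci).
Definition iSigmaX : M2 := mkM2 C0 Ci Ci C0.

Record T6 := mkT6 { tA : M2; tB : M2; ta : M2; tb : M2; th : M2; tw : M2 }.

Definition T6dist (p q : T6) : R :=
  Mdist (tA p) (tA q) + Mdist (tB p) (tB q) + Mdist (ta p) (ta q)
  + Mdist (tb p) (tb q) + Mdist (th p) (th q) + Mdist (tw p) (tw q).

Definition Rep (p : T6) : Prop :=
  SU2 (tA p) /\ SU2 (tB p) /\ SU2 (ta p) /\ SU2 (tb p) /\ SU2 (th p) /\ SU2 (tw p)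
  /\ Mtr (ta p) = C0 /\ Mtr (th p) = C0
  /\ tw p = Mneg Mid
  /\ Mmul (Mmul (th p) (tw p)) (ta p) = Mmul (ta p) (th p)
  /\ Mmul (ta p) (tb p) = Mid
  /\ tB p = Mid.

Definition conjM (g X : M2) : M2 := Mmul (Mmul g X) (Madj g).
Definition conjT (g : M2) (p : T6) : T6 :=
  mkT6 (conjM g (tA p)) (conjM g (tB p)) (conjM g (ta p))
       (conjM g (tb p)) (conjM g (th p)) (conjM g (tw p)).
Definition conjEquiv (p q : T6) : Prop := exists g, SU2 g /\ q = conjT g p.

Definition cls (p : T6) : T6 -> Prop := fun q => conjEquiv p q.

(** The traceless character variety R^natural(S^1 x D^2, A_1): the set of
    conjugacy classes of points of Rep. *)
Definition RChar : Type := { P : T6 -> Prop | exists p, Rep p /\ P = cls p }.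

(** Subspace topology on Rep (from the Euclidean topology of M2^6 = R^48;
    the L1 metric T6dist induces it). *)
Definition openRep (V : T6 -> Prop) : Prop :=
  forall p, Rep p -> V p ->
    exists eps, 0 < eps /\
      forall q, Rep q -> T6dist p q < eps -> V q.

Definition openRChar (S : RChar -> Prop) : Prop :=
  openRep (fun p => Rep p /\ exists c : RChar, S c /\ proj1_sig c p).

Definition S3 : Type := { z : C * C | Cnorm2 (fst z) + Cnorm2 (snd z) = 1 }.
Definition S3dist (z w : S3) : R :=
  Cdist (fst (proj1_sig z)) (fst (proj1_sig w))
  + Cdist (snd (proj1_sig z)) (snd (proj1_sig w)).
Definition openS3 (U : S3 -> Prop) : Prop :=
  forall z, U z -> exists eps, 0 < eps /\
    forall w, S3dist z w < eps -> U w.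

Definition homeomorphism (f : S3 -> RChar) : Prop :=
  exists g : RChar -> S3,
    (forall z, g (f z) = z) /\ (forall c, f (g c) = c)
    /\ (forall S, openRChar S -> openS3 (fun z => S (f z)))
    /\ (forall U, openS3 U -> openRChar (fun c => U (g c))).

Definition tupleOf (z1 z2 : C) : T6 :=
  mkT6 (mkM2 z1 (Copp (Cconj z2)) z2 (Cconj z1))
       Mid
       iSigmaZ
       (Madj iSigmaZ)  (* = a^{-1}, since a is in SU(2) *)
       iSigmaX
       (Mneg Mid).

Definition abelianT (p : T6) : Prop :=
  let l := (tA p :: tB p :: ta p :: tb p :: th p :: tw p :: nil)%list in
  forall X Y, List.In X l -> List.In Y l -> Mmul X Y = Mmul Y X.

(* Main.v *)
Require Import Defs.
From Stdlib Require Import Reals.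
From Stdlib Require Import Lra Psatz Classical ClassicalEpsilon FunctionalExtensionality PropExtensionality ProofIrrelevance.
Import Defs.
Open Scope R_scope.

Definition QC (z1 z2 : C) : M2 := mkM2 z1 (Copp (Cconj z2)) z2 (Cconj z1).
Definition Madd (X Y : M2) : M2 :=
  mkM2 (Cadd (m11 X) (m11 Y)) (Cadd (m12 X) (m12 Y)) (Cadd (m21 X) (m21 Y)) (Cadd (m22 X) (m22 Y)).
Definition Mscr (k : R) (X : M2) : M2 :=
  mkM2 (k * fst (m11 X), k * snd (m11 X)) (k * fst (m12 X), k * snd (m12 X))
       (k * fst (m21 X), k * snd (m21 X)) (k * fst (m22 X), k * snd (m22 X)).
Definition M0 : M2 := mkM2 C0 C0 C0 C0.

Lemma M2_ext (X Y : M2) :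
  fst (m11 X) = fst (m11 Y) -> snd (m11 X) = snd (m11 Y) ->
  fst (m12 X) = fst (m12 Y) -> snd (m12 X) = snd (m12 Y) ->
  fst (m21 X) = fst (m21 Y) -> snd (m21 X) = snd (m21 Y) ->
  fst (m22 X) = fst (m22 Y) -> snd (m22 X) = snd (m22 Y) -> X = Y.
Proof.
  destruct X as [[a1 a2] [b1 b2] [c1 c2] [d1 d2]], Y as [[e1 e2] [f1 f2] [g1 g2] [h1 h2]];
  simpl; intros; subst; reflexivity.
Qed.

Ltac dM := repeat match goal with X : M2 |- _ => destruct X end;
           repeat match goal with z : C |- _ => destruct z end.
Ltac mring := dM; apply M2_ext; cbn [iSigmaZ iSigmaX Mmul Madj Madd Mscr Mneg Mid M0 QC
  Cadd Cmul Copp Cconj C0 C1 Ci fst snd m11 m12 m21 m22]; ring.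

Lemma Mmul_assoc X Y Z : Mmul (Mmul X Y) Z = Mmul X (Mmul Y Z). Proof. mring. Qed.
Lemma Mmul_id_l X : Mmul Mid X = X. Proof. mring. Qed.
Lemma Mmul_id_r X : Mmul X Mid = X. Proof. mring. Qed.
Lemma Madj_mul X Y : Madj (Mmul X Y) = Mmul (Madj Y) (Madj X). Proof. mring. Qed.
Lemma Madj_adj X : Madj (Madj X) = X. Proof. mring. Qed.
Lemma Madj_id : Madj Mid = Mid. Proof. mring. Qed.
Lemma Mdet_mul X Y : Mdet (Mmul X Y) = Cmul (Mdet X) (Mdet Y).
Proof. dM; unfold Mdet, Mmul, Cmul, Cadd, Copp; simpl; f_equal; ring. Qed.
Lemma Mdet_adj X : Mdet (Madj X) = Cconj (Mdet X).
Proof. dM; unfold Mdet, Madj, Cmul, Cadd, Copp, Cconj; simpl; f_equal; ring. Qed.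
Lemma Mtr_cyc X Y : Mtr (Mmul X Y) = Mtr (Mmul Y X).
Proof. dM; unfold Mtr, Mmul, Cmul, Cadd; simpl; f_equal; ring. Qed.
Lemma Mneg_mul_l X Y : Mmul (Mneg X) Y = Mneg (Mmul X Y). Proof. mring. Qed.
Lemma Mneg_mul_r X Y : Mmul X (Mneg Y) = Mneg (Mmul X Y). Proof. mring. Qed.
Lemma Mscr_mul_l k X Y : Mmul (Mscr k X) Y = Mscr k (Mmul X Y). Proof. mring. Qed.
Lemma Mscr_mul_r k X Y : Mmul X (Mscr k Y) = Mscr k (Mmul X Y). Proof. mring. Qed.
Lemma Madj_scr k X : Madj (Mscr k X) = Mscr k (Madj X). Proof. mring. Qed.
Lemma Mscr_scr k l X : Mscr k (Mscr l X) = Mscr (k * l) X. Proof. mring. Qed.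
Lemma Mscr_1 X : Mscr 1 X = X. Proof. mring. Qed.
Lemma Madd_0 X : Madd X M0 = X. Proof. mring. Qed.
Lemma Mmul_0_l X : Mmul M0 X = M0. Proof. mring. Qed.
Lemma Mmul_0_r X : Mmul X M0 = M0. Proof. mring. Qed.
Lemma Mneg_0 : Mneg M0 = M0. Proof. mring. Qed.
Lemma Madd_negl X : Madd (Mneg X) X = M0. Proof. mring. Qed.
Lemma Madd_negr X : Madd X (Mneg X) = M0. Proof. mring. Qed.

Definition Madjug (X : M2) : M2 := mkM2 (m22 X) (Copp (m12 X)) (Copp (m21 X)) (m11 X).
Lemma adjug_mul X : Mmul (Madjug X) X = mkM2 (Mdet X) C0 C0 (Mdet X).
Proof. unfold Madjug, Mdet; mring. Qed.

Lemma SU2_QC X : SU2 X -> X = QC (m11 X) (m21 X) /\ Cnorm2 (m11 X) + Cnorm2 (m21 X) = 1.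
Proof.
  intros [H1 H2].
  assert (E : Madjug X = Madj X).
  { rewrite <- (Mmul_id_r (Madjug X)), <- H1, <- Mmul_assoc, adjug_mul, H2.
    apply Mmul_id_l. }
  assert (F := f_equal (fun M => fst (m11 M)) H1). simpl in F.
  destruct X as [[a1 a2] [b1 b2] [c1 c2] [d1 d2]].
  unfold Madjug, Madj, Copp, Cconj in E; simpl in E. injection E; intros; subst.
  unfold Cnorm2, Cadd, Cmul, Cconj, Copp in *; simpl in *. split.
  - apply M2_ext; simpl; lra.
  - nra.
Qed.

Lemma QC_SU2 z1 z2 : Cnorm2 z1 + Cnorm2 z2 = 1 -> SU2 (QC z1 z2).
Proof.
  destruct z1 as [x1 y1], z2 as [x2 y2]; unfold Cnorm2; simpl; intros H; split.
  - apply M2_ext; unfold QC, Mmul, Madj, Mid, Cadd, Cmul, Cconj, Copp, C1, C0; simpl; nra.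
  - unfold Mdet, QC, C1, Cadd, Cmul, Copp, Cconj; simpl; f_equal; nra.
Qed.

Lemma QC_adj_l z1 z2 : Cnorm2 z1 + Cnorm2 z2 = 1 -> Mmul (Madj (QC z1 z2)) (QC z1 z2) = Mid.
Proof.
  destruct z1 as [x1 y1], z2 as [x2 y2]; unfold Cnorm2; simpl; intros H.
  apply M2_ext; unfold QC, Mmul, Madj, Mid, Cadd, Cmul, Cconj, Copp, C1, C0; simpl; nra.
Qed.

Lemma SU2_adj_l X : SU2 X -> Mmul (Madj X) X = Mid.
Proof.
  intros H; destruct (SU2_QC X H) as [E N]. rewrite E. apply QC_adj_l; exact N.
Qed.

Lemma SU2_mul X Y : SU2 X -> SU2 Y -> SU2 (Mmul X Y).
Proof.
  intros [H1 H2] [H3 H4]; split.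
  - rewrite Madj_mul, Mmul_assoc, <- (Mmul_assoc Y), H3, Mmul_id_l; exact H1.
  - rewrite Mdet_mul, H2, H4. unfold Cmul, C1; simpl; f_equal; ring.
Qed.

Lemma SU2_adj X : SU2 X -> SU2 (Madj X).
Proof.
  intros H; split.
  - rewrite Madj_adj; apply SU2_adj_l; exact H.
  - destruct H as [_ H]; rewrite Mdet_adj, H; unfold Cconj, C1; simpl; f_equal; ring.
Qed.

Lemma SU2_id : SU2 Mid.
Proof. split. - rewrite Madj_id; apply Mmul_id_l. - unfold Mdet, Mid, C1, C0, Cadd, Cmul, Copp; simpl; f_equal; ring. Qed.

Lemma SU2_bound X : SU2 X ->
  Rabs (fst (m11 X)) <= 1 /\ Rabs (snd (m11 X)) <= 1 /\
  Rabs (fst (m12 X)) <= 1 /\ Rabs (snd (m12 X)) <= 1 /\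
  Rabs (fst (m21 X)) <= 1 /\ Rabs (snd (m21 X)) <= 1 /\
  Rabs (fst (m22 X)) <= 1 /\ Rabs (snd (m22 X)) <= 1.
Proof.
  intros [H1 _].
  assert (F1 := f_equal (fun M => fst (m11 M)) H1).
  assert (F2 := f_equal (fun M => fst (m22 M)) H1).
  destruct X as [[a1 a2] [b1 b2] [c1 c2] [d1 d2]].
  unfold Mmul, Madj, Mid, Cadd, Cmul, Cconj, C1, C0 in F1, F2; simpl in *.
  repeat split; apply Rabs_le; split; nra.
Qed.

Lemma conjM_mul g X Y : SU2 g -> Mmul (conjM g X) (conjM g Y) = conjM g (Mmul X Y).
Proof.
  intros H; unfold conjM.
  rewrite !Mmul_assoc, <- (Mmul_assoc (Madj g) g), (SU2_adj_l g H), Mmul_id_l; reflexivity.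
Qed.

Lemma conjM_adj g X : Madj (conjM g X) = conjM g (Madj X).
Proof. unfold conjM; rewrite !Madj_mul, Madj_adj, Mmul_assoc; reflexivity. Qed.

Lemma conjM_tr g X : SU2 g -> Mtr (conjM g X) = Mtr X.
Proof.
  intros H; unfold conjM; rewrite Mtr_cyc, <- Mmul_assoc, (SU2_adj_l g H), Mmul_id_l; reflexivity.
Qed.

Lemma conjM_id X : conjM Mid X = X.
Proof. unfold conjM; rewrite Madj_id, Mmul_id_l, Mmul_id_r; reflexivity. Qed.

Lemma conjM_comp g1 g2 X : conjM g2 (conjM g1 X) = conjM (Mmul g2 g1) X.
Proof. unfold conjM; rewrite Madj_mul, !Mmul_assoc; reflexivity. Qed.

Lemma conjT_id p : conjT Mid p = p.
Proof. destruct p; unfold conjT; simpl; rewrite !conjM_id; reflexivity. Qed.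

Lemma conjT_comp g1 g2 p : conjT g2 (conjT g1 p) = conjT (Mmul g2 g1) p.
Proof. destruct p; unfold conjT; simpl; rewrite !conjM_comp; reflexivity. Qed.

Lemma conjT_inv g p : SU2 g -> conjT (Madj g) (conjT g p) = p.
Proof. intros H; rewrite conjT_comp, SU2_adj_l by exact H; apply conjT_id. Qed.

Lemma conjEquiv_refl p : conjEquiv p p.
Proof. exists Mid; split; [apply SU2_id | symmetry; apply conjT_id]. Qed.

Lemma conjEquiv_sym p q : conjEquiv p q -> conjEquiv q p.
Proof.
  intros [g [Hg E]]; exists (Madj g); split; [apply SU2_adj; exact Hg|].
  subst q; symmetry; apply conjT_inv; exact Hg.
Qed.

Lemma conjEquiv_trans p q r : conjEquiv p q -> conjEquiv q r -> conjEquiv p r.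
Proof.
  intros [g [Hg E]] [g' [Hg' E']]; exists (Mmul g' g); split; [apply SU2_mul; assumption|].
  subst; apply conjT_comp.
Qed.

Definition Cmi (z : C) : C := (snd z, - fst z).
Definition Cpi (z : C) : C := (- snd z, fst z).
Definition XE1 (X : M2) : M2 := mkM2 (Cmi (m11 X)) (Cpi (m12 X)) (Cmi (m21 X)) (Cpi (m22 X)).
Definition XE2 (X : M2) : M2 := mkM2 (Cmi (m12 X)) (Cmi (m11 X)) (Cmi (m22 X)) (Cmi (m21 X)).
Definition XE3 (X : M2) : M2 := mkM2 (Copp (m12 X)) (m11 X) (Copp (m22 X)) (m21 X).
Definition e3 : M2 := mkM2 C0 (-1, 0) (1, 0) C0.

Definition Nmat (a h X : M2) : M2 :=
  Madd (Madd (Madd X (Mmul a (XE1 X))) (Mmul h (XE2 X))) (Mmul (Mmul a h) (XE3 X)).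

Ltac mring2 := dM; apply M2_ext; cbn [Nmat XE1 XE2 XE3 e3 iSigmaZ iSigmaX Mmul Madj Madd Mscr Mneg Mid M0 QC
  Cmi Cpi Cadd Cmul Copp Cconj C0 C1 Ci fst snd m11 m12 m21 m22]; ring.

Lemma XE1_eq X : XE1 X = Mmul X (Madj iSigmaZ). Proof. mring2. Qed.
Lemma XE2_eq X : XE2 X = Mmul X (Madj iSigmaX). Proof. mring2. Qed.
Lemma XE3_eq X : XE3 X = Mmul X (Madj e3). Proof. mring2. Qed.
Lemma e3_eq : e3 = Mmul iSigmaZ iSigmaX. Proof. mring2. Qed.


Lemma Nmat_id1 a h X : Mmul a (Nmat a h X) =
  Madd (Mmul (Nmat a h X) iSigmaZ)
       (Mmul (Madd (Mmul a a) Mid) (Madd (XE1 X) (Mmul h (XE3 X)))).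
Proof. mring2. Qed.

Lemma Nmat_id2 a h X : Mmul h (Nmat a h X) =
  Madd (Mmul (Nmat a h X) iSigmaX)
   (Madd (Mmul (Madd (Mmul h a) (Mmul a h)) (Madd (XE1 X) (Mmul h (XE3 X))))
     (Madd (Mmul (Madd (Mmul h h) Mid) (XE2 X))
           (Mneg (Mmul a (Mmul (Madd (Mmul h h) Mid) (XE3 X)))))).
Proof. mring2. Qed.

Lemma Nmat_trace a h :
  fst (Mtr (Mmul (Nmat a h Mid) (Madj Mid))) + fst (Mtr (Mmul (Nmat a h iSigmaZ) (Madj iSigmaZ)))
  + fst (Mtr (Mmul (Nmat a h iSigmaX) (Madj iSigmaX))) + fst (Mtr (Mmul (Nmat a h e3) (Madj e3))) = 8.
Proof.
  dM; cbn [Mtr Nmat XE1 XE2 XE3 e3 iSigmaZ iSigmaX Mmul Madj Madd Mscr Mneg Mid M0 QC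
  Cmi Cpi Cadd Cmul Copp Cconj C0 C1 Ci fst snd m11 m12 m21 m22]; ring.
Qed.

Definition IsQ (X : M2) : Prop := exists z1 z2, X = QC z1 z2.
Definition lam (N : M2) : R := Cnorm2 (m11 N) + Cnorm2 (m21 N).

Ltac qclos := intros; repeat match goal with H : IsQ _ |- _ => destruct H as [? [? ->]] end;
  match goal with |- IsQ ?Y => exists (m11 Y), (m21 Y) end; mring2.

Lemma IsQ_add X Y : IsQ X -> IsQ Y -> IsQ (Madd X Y). Proof. qclos. Qed.
Lemma IsQ_mul X Y : IsQ X -> IsQ Y -> IsQ (Mmul X Y). Proof. qclos. Qed.
Lemma IsQ_XE1 X : IsQ X -> IsQ (XE1 X). Proof. qclos. Qed.
Lemma IsQ_XE2 X : IsQ X -> IsQ (XE2 X). Proof. qclos. Qed.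
Lemma IsQ_XE3 X : IsQ X -> IsQ (XE3 X). Proof. qclos. Qed.
Lemma IsQ_Mid : IsQ Mid. Proof. qclos. Qed.
Lemma IsQ_Z : IsQ iSigmaZ. Proof. qclos. Qed.
Lemma IsQ_X : IsQ iSigmaX. Proof. qclos. Qed.
Lemma IsQ_e3 : IsQ e3. Proof. qclos. Qed.

Lemma IsQ_Nmat a h X : IsQ a -> IsQ h -> IsQ X -> IsQ (Nmat a h X).
Proof.
  intros Ha Hh HX; unfold Nmat.
  repeat first [apply IsQ_add | apply IsQ_mul | apply IsQ_XE1 | apply IsQ_XE2 | apply IsQ_XE3 | assumption].
Qed.

Lemma IsQ_zero N : IsQ N -> lam N <= 0 -> N = M0.
Proof.
  intros [[x1 y1] [[x2 y2] ->]]; unfold lam, Cnorm2; cbn [QC m11 m21 fst snd]; intros H.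
  assert (x1 = 0) by nra; assert (y1 = 0) by nra; assert (x2 = 0) by nra; assert (y2 = 0) by nra.
  subst; apply M2_ext; cbn [QC M0 C0 Copp Cconj m11 m12 m21 m22 fst snd]; ring.
Qed.

Lemma IsQ_norm N : IsQ N -> Mmul N (Madj N) = Mscr (lam N) Mid.
Proof. intros [z1 [z2 ->]]; unfold lam, Cnorm2; mring2. Qed.

Lemma trM0 X : fst (Mtr (Mmul M0 X)) = 0.
Proof. rewrite Mmul_0_l; cbn [Mtr M0 C0 Cadd fst m11 m22]; ring. Qed.

Lemma good_X a h : IsQ a -> IsQ h -> exists X, IsQ X /\ 0 < lam (Nmat a h X).
Proof.
  intros Ha Hh. apply NNPP; intros Hn.
  assert (Z : forall X, IsQ X -> Nmat a h X = M0).
  { intros X HX. apply IsQ_zero. apply IsQ_Nmat; assumption.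
    apply Rnot_lt_le; intros Hl; apply Hn; exists X; split; assumption. }
  pose proof (Nmat_trace a h) as T.
  rewrite (Z Mid IsQ_Mid), (Z _ IsQ_Z), (Z _ IsQ_X), (Z _ IsQ_e3), !trM0 in T. lra.
Qed.

Lemma QC_scr k z1 z2 : Mscr k (QC z1 z2) = QC (k * fst z1, k * snd z1) (k * fst z2, k * snd z2).
Proof. mring2. Qed.

Lemma QC_sq z1 z2 : fst z1 = 0 -> Cnorm2 z1 + Cnorm2 z2 = 1 -> Mmul (QC z1 z2) (QC z1 z2) = Mneg Mid.
Proof.
  destruct z1 as [x1 y1], z2 as [x2 y2]; unfold Cnorm2; cbn [fst snd]; intros -> H.
  apply M2_ext; cbn [Mmul QC Mneg Mid Cadd Cmul Copp Cconj C0 C1 m11 m12 m21 m22 fst snd]; nra.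
Qed.

Lemma QC_tr z1 z2 : Mtr (QC z1 z2) = C0 -> fst z1 = 0.
Proof.
  destruct z1 as [x1 y1]; cbn [Mtr QC Cadd Cconj C0 m11 m22 fst snd]; intros H.
  injection H; intros; lra.
Qed.

Lemma Mneg_neg X : Mneg (Mneg X) = X. Proof. mring. Qed.

Lemma key_scal L : 0 < L -> / sqrt L * / sqrt L * L = 1.
Proof.
  intros H. rewrite <- Rinv_mult, sqrt_sqrt by lra. field. lra.
Qed.

Lemma inv_eq a b : SU2 a -> Mmul a b = Mid -> b = Madj a.
Proof.
  intros Ha Hab. rewrite <- (Mmul_id_l b), <- (SU2_adj_l a Ha), Mmul_assoc, Hab, Mmul_id_r. reflexivity.
Qed.

Lemma normal_form p : Rep p -> exists g z1 z2, SU2 g /\ Cnorm2 z1 + Cnorm2 z2 = 1 /\ p = conjT g (tupleOf z1 z2).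
Proof.
  destruct p as [A B a b h w]; unfold Rep; cbn [tA tB ta tb th tw].
  intros (HA&HB&Ha&Hb&Hh&Hw&Hta&Hth&Hw'&Hrel&Hab&HB').
  subst w B.
  destruct (SU2_QC a Ha) as [Ea Na].
  assert (Qa : IsQ a) by (exists (m11 a), (m21 a); exact Ea).
  assert (aa : Mmul a a = Mneg Mid).
  { rewrite Ea. apply QC_sq; [apply (QC_tr _ (m21 a)); rewrite <- Ea; exact Hta | exact Na]. }
  destruct (SU2_QC h Hh) as [Eh Nh].
  assert (Qh : IsQ h) by (exists (m11 h), (m21 h); exact Eh).
  assert (hh : Mmul h h = Mneg Mid).
  { rewrite Eh. apply QC_sq; [apply (QC_tr _ (m21 h)); rewrite <- Eh; exact Hth | exact Nh]. }
  assert (ha : Mmul h a = Mneg (Mmul a h)).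
  { rewrite <- Hrel, Mneg_mul_r, Mmul_id_r, Mneg_mul_l, Mneg_neg. reflexivity. }
  destruct (good_X a h Qa Qh) as [X [QX Hl]].
  set (N := Nmat a h X) in *.
  assert (N1 : Mmul N iSigmaZ = Mmul a N).
  { unfold N; rewrite Nmat_id1, aa, Madd_negl, Mmul_0_l, Madd_0. reflexivity. }
  assert (N2 : Mmul N iSigmaX = Mmul h N).
  { unfold N; rewrite Nmat_id2, hh, ha, !Madd_negl, !Mmul_0_l, Mmul_0_r, Mneg_0, !Madd_0.
    reflexivity. }
  assert (QN : IsQ N) by (apply IsQ_Nmat; assumption).
  set (k := / sqrt (lam N)).
  assert (Kk : k * k * lam N = 1) by (apply key_scal; exact Hl).
  clearbody k N.
  set (g := Mscr k N).
  assert (Hg : SU2 g).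
  { unfold g. destruct QN as [n1 [n2 En]]. rewrite En. rewrite En in Kk. rewrite QC_scr. apply QC_SU2.
    unfold lam, Cnorm2 in *; cbn [QC m11 m21 fst snd] in *. destruct n1, n2; cbn [fst snd] in *.
    rewrite <- Kk; ring. }
  assert (Cj : forall Y Z, Mmul N Y = Mmul Z N -> conjM g Y = Z).
  { intros Y Z HY. unfold conjM, g.
    rewrite !Mscr_mul_l, Madj_scr, !Mscr_mul_r, !Mscr_scr, HY, Mmul_assoc, IsQ_norm by exact QN.
    rewrite Mscr_mul_r, Mmul_id_r, Mscr_scr, Kk, Mscr_1. reflexivity. }
  assert (CZ : conjM g iSigmaZ = a) by (apply Cj; exact N1).
  assert (CX : conjM g iSigmaX = h) by (apply Cj; exact N2).
  set (A' := conjM (Madj g) A).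
  assert (HA' : SU2 A').
  { unfold A', conjM. apply SU2_mul; [apply SU2_mul|]; try assumption.
    apply SU2_adj; assumption. apply SU2_adj, SU2_adj; assumption. }
  destruct (SU2_QC A' HA') as [EA' NA'].
  exists g, (m11 A'), (m21 A'). split; [exact Hg|]. split; [exact NA'|].
  destruct Hg as [Hg1 Hg2].
  unfold conjT, tupleOf; cbn [tA tB ta tb th tw]. f_equal.
  - change (mkM2 (m11 A') (Copp (Cconj (m21 A'))) (m21 A') (Cconj (m11 A'))) with (QC (m11 A') (m21 A')).
    rewrite <- EA'. unfold A'. rewrite conjM_comp, Hg1, conjM_id. reflexivity.
  - unfold conjM; rewrite Mmul_id_r, Hg1; reflexivity.
  - symmetry; exact CZ.
  - rewrite <- conjM_adj, CZ. apply inv_eq; assumption.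
  - symmetry; exact CX.
  - unfold conjM; rewrite Mneg_mul_r, Mmul_id_r, Mneg_mul_l, Hg1; reflexivity.
Qed.

Definition tk (E : T6 -> M2) (p : T6) : R := fst (Mtr (Mmul (tA p) (Madj (E p)))) / 2.
Definition E0 (p : T6) : M2 := Mid.
Definition E3 (p : T6) : M2 := Mmul (ta p) (th p).
Definition F (p : T6) : C * C := ((tk E0 p, tk ta p), (tk E3 p, tk th p)).

Lemma F_tuple z1 z2 : F (tupleOf z1 z2) = (z1, z2).
Proof.
  destruct z1 as [x1 y1], z2 as [x2 y2].
  unfold F, tk, E0, E3, tupleOf.
  cbn [tA ta th Mtr Mmul Madj Mid iSigmaZ iSigmaX Cadd Cmul Copp Cconj C0 C1 Ci m11 m12 m21 m22 fst snd].
  apply (f_equal2 pair); apply (f_equal2 pair); field.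
Qed.

Lemma F_inv g p : SU2 g -> F (conjT g p) = F p.
Proof.
  intros Hg. destruct p as [A B a b h w].
  unfold F, tk, E0, E3, conjT; cbn [tA ta th].
  rewrite !Madj_id, !Mmul_id_r, conjM_tr by exact Hg.
  rewrite conjM_mul by exact Hg.
  rewrite !conjM_adj, !conjM_mul, !conjM_tr by exact Hg. reflexivity.
Qed.

Lemma F_equiv p q : conjEquiv p q -> F q = F p.
Proof. intros [g [Hg ->]]; apply F_inv; exact Hg. Qed.

Lemma F_S3 p : Rep p -> Cnorm2 (fst (F p)) + Cnorm2 (snd (F p)) = 1.
Proof.
  intros H. destruct (normal_form p H) as [g [z1 [z2 [Hg [Hn ->]]]]].
  rewrite F_inv, F_tuple by exact Hg. exact Hn.
Qed.

Definition LipB (f : T6 -> R) := exists K B, 0 <= K /\ 0 <= B /\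
  (forall p q, Rep p -> Rep q -> Rabs (f p - f q) <= K * T6dist p q) /\
  (forall p, Rep p -> Rabs (f p) <= B).

Ltac allpos := repeat match goal with |- context [Rabs ?x] =>
  lazymatch goal with H : 0 <= Rabs x |- _ => fail | _ => pose proof (Rabs_pos x) end end.

Lemma Cdist_pos z w : 0 <= Cdist z w. Proof. unfold Cdist; allpos; lra. Qed.
Lemma Mdist_pos X Y : 0 <= Mdist X Y.
Proof. unfold Mdist; pose proof (Cdist_pos (m11 X) (m11 Y)); pose proof (Cdist_pos (m12 X) (m12 Y));
  pose proof (Cdist_pos (m21 X) (m21 Y)); pose proof (Cdist_pos (m22 X) (m22 Y)); lra. Qed.
Lemma T6dist_pos p q : 0 <= T6dist p q.
Proof. unfold T6dist; pose proof (Mdist_pos (tA p) (tA q)); pose proof (Mdist_pos (tB p) (tB q));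
  pose proof (Mdist_pos (ta p) (ta q)); pose proof (Mdist_pos (tb p) (tb q));
  pose proof (Mdist_pos (th p) (th q)); pose proof (Mdist_pos (tw p) (tw q)); lra. Qed.

Lemma LipB_const c : LipB (fun _ => c).
Proof.
  exists 0, (Rabs c); repeat split; try lra; [apply Rabs_pos| |].
  - intros; unfold Rminus; rewrite Rplus_opp_r, Rabs_R0; lra.
  - intros; lra.
Qed.

Lemma LipB_plus f g : LipB f -> LipB g -> LipB (fun p => f p + g p).
Proof.
  intros (K1&B1&HK1&HB1&L1&Bd1) (K2&B2&HK2&HB2&L2&Bd2).
  exists (K1 + K2), (B1 + B2); repeat split; try lra.
  - intros p q Hp Hq. replace (f p + g p - (f q + g q)) with ((f p - f q) + (g p - g q)) by ring.
    eapply Rle_trans; [apply Rabs_triang|]. specialize (L1 p q Hp Hq); specialize (L2 p q Hp Hq). lra.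
  - intros p Hp. eapply Rle_trans; [apply Rabs_triang|]. specialize (Bd1 p Hp); specialize (Bd2 p Hp). lra.
Qed.

Lemma LipB_opp f : LipB f -> LipB (fun p => - f p).
Proof.
  intros (K1&B1&HK1&HB1&L1&Bd1). exists K1, B1; repeat split; try lra.
  - intros p q Hp Hq. replace (- f p - - f q) with (- (f p - f q)) by ring. rewrite Rabs_Ropp; auto.
  - intros p Hp. rewrite Rabs_Ropp; auto.
Qed.

Lemma LipB_minus f g : LipB f -> LipB g -> LipB (fun p => f p - g p).
Proof. intros H1 H2. apply (LipB_plus f (fun p => - g p)); [exact H1 | apply LipB_opp; exact H2]. Qed.

Lemma LipB_mul f g : LipB f -> LipB g -> LipB (fun p => f p * g p).
Proof.
  intros (K1&B1&HK1&HB1&L1&Bd1) (K2&B2&HK2&HB2&L2&Bd2).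
  exists (B1 * K2 + B2 * K1), (B1 * B2); repeat split.
  - apply Rplus_le_le_0_compat; apply Rmult_le_pos; assumption.
  - apply Rmult_le_pos; assumption.
  - intros p q Hp Hq.
    replace (f p * g p - f q * g q) with (f p * (g p - g q) + g q * (f p - f q)) by ring.
    eapply Rle_trans; [apply Rabs_triang|]. rewrite !Rabs_mult.
    pose proof (T6dist_pos p q).
    assert (A1 : Rabs (f p) * Rabs (g p - g q) <= B1 * (K2 * T6dist p q)).
    { apply Rmult_le_compat; try apply Rabs_pos; auto. }
    assert (A2 : Rabs (g q) * Rabs (f p - f q) <= B2 * (K1 * T6dist p q)).
    { apply Rmult_le_compat; try apply Rabs_pos; auto. }
    nra.
  - intros p Hp. rewrite Rabs_mult. apply Rmult_le_compat; try apply Rabs_pos; auto.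
Qed.

Lemma LipB_div2 f : LipB f -> LipB (fun p => f p / 2).
Proof.
  intros H. unfold Rdiv. apply (LipB_mul f (fun _ => / 2)); [exact H | apply LipB_const].
Qed.

Lemma LipB_base (sel : T6 -> M2) (ent : M2 -> Defs.C) (pr : Defs.C -> R) :
  (forall p, Rep p -> SU2 (sel p)) ->
  (forall X Y, Rabs (pr (ent X) - pr (ent Y)) <= Mdist X Y) ->
  (forall X, SU2 X -> Rabs (pr (ent X)) <= 1) ->
  (forall p q, Mdist (sel p) (sel q) <= T6dist p q) ->
  LipB (fun p => pr (ent (sel p))).
Proof.
  intros H1 H2 H3 H4. exists 1, 1; repeat split; try lra.
  - intros p q _ _. eapply Rle_trans; [apply H2|]. rewrite Rmult_1_l; apply H4.
  - intros p Hp; apply H3, H1, Hp.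
Qed.

Ltac base_tac :=
  apply LipB_base;
  [ intros ?p ?Hp; unfold Rep in Hp; tauto
  | intros ?X ?Y; unfold Mdist, Cdist; allpos; lra
  | intros ?X ?HX; pose proof (SU2_bound _ HX); tauto
  | intros ?p ?q; unfold T6dist;
    pose proof (Mdist_pos (tA p) (tA q)); pose proof (Mdist_pos (tB p) (tB q));
    pose proof (Mdist_pos (ta p) (ta q)); pose proof (Mdist_pos (tb p) (tb q));
    pose proof (Mdist_pos (th p) (th q)); pose proof (Mdist_pos (tw p) (tw q)); lra ].

Ltac lipb := repeat first [ apply LipB_plus | apply LipB_minus | apply LipB_opp | apply LipB_mul
  | apply LipB_div2 | apply LipB_const | base_tac ].

Lemma tk_lip E : (E = E0 \/ E = ta \/ E = th \/ E = E3) -> LipB (tk E).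
Proof.
  intros [ -> | [ -> | [ -> | -> ] ] ]; unfold tk, E0, E3;
  cbn [Mtr Mmul Madj Mid Cadd Cmul Copp Cconj C0 C1 m11 m12 m21 m22 fst snd]; lipb.
Qed.

Lemma F_lip : exists K, 0 <= K /\ forall p q, Rep p -> Rep q ->
  Cdist (fst (F p)) (fst (F q)) + Cdist (snd (F p)) (snd (F q)) <= K * T6dist p q.
Proof.
  destruct (tk_lip E0 (or_introl eq_refl)) as (K0&_&HK0&_&L0&_).
  destruct (tk_lip ta (or_intror (or_introl eq_refl))) as (K1&_&HK1&_&L1&_).
  destruct (tk_lip th (or_intror (or_intror (or_introl eq_refl)))) as (K2&_&HK2&_&L2&_).
  destruct (tk_lip E3 (or_intror (or_intror (or_intror eq_refl)))) as (K3&_&HK3&_&L3&_).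
  exists (K0 + K1 + K2 + K3); split; [lra|].
  intros p q Hp Hq. unfold F, Cdist; cbn [fst snd].
  specialize (L0 p q Hp Hq); specialize (L1 p q Hp Hq); specialize (L2 p q Hp Hq); specialize (L3 p q Hp Hq).
  lra.
Qed.

Lemma SU2_Z : SU2 iSigmaZ.
Proof. split; [mring|]. unfold Mdet, iSigmaZ, Cadd, Cmul, Copp, C0, C1, Ci; cbn [m11 m12 m21 m22 fst snd]; apply (f_equal2 pair); ring. Qed.
Lemma SU2_X : SU2 iSigmaX.
Proof. split; [mring|]. unfold Mdet, iSigmaX, Cadd, Cmul, Copp, C0, C1, Ci; cbn [m11 m12 m21 m22 fst snd]; apply (f_equal2 pair); ring. Qed.
Lemma SU2_negid : SU2 (Mneg Mid).
Proof. split; [mring|]. unfold Mdet, Mneg, Mid, Cadd, Cmul, Copp, C0, C1; cbn [m11 m12 m21 m22 fst snd]; apply (f_equal2 pair); ring. Qed.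

Lemma Rep_tuple z1 z2 : Cnorm2 z1 + Cnorm2 z2 = 1 -> Rep (tupleOf z1 z2).
Proof.
  intros Hn. unfold Rep, tupleOf; cbn [tA tB ta tb th tw].
  split; [change (SU2 (QC z1 z2)); apply QC_SU2; exact Hn|].
  split; [apply SU2_id|]. split; [apply SU2_Z|]. split; [apply SU2_adj, SU2_Z|].
  split; [apply SU2_X|]. split; [apply SU2_negid|].
  split; [unfold Mtr, iSigmaZ, Cadd, Copp, C0, Ci; cbn [m11 m22 fst snd]; apply (f_equal2 pair); ring|].
  split; [unfold Mtr, iSigmaX, Cadd, Copp, C0, Ci; cbn [m11 m22 fst snd]; apply (f_equal2 pair); ring|].
  split; [reflexivity|]. split; [mring|]. split; [mring|]. reflexivity.
Qed.

Definition clsR (p : T6) (H : Rep p) : RChar := exist _ (cls p) (ex_intro _ p (conj H eq_refl)).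

Lemma cls_eq p q : conjEquiv p q -> cls p = cls q.
Proof.
  intros H. apply functional_extensionality; intros r. apply propositional_extensionality.
  unfold cls; split; intros H'.
  - apply (conjEquiv_trans q p r); [apply conjEquiv_sym; exact H | exact H'].
  - apply (conjEquiv_trans p q r); assumption.
Qed.

Lemma RChar_ext (c d : RChar) : proj1_sig c = proj1_sig d -> c = d.
Proof. destruct c as [c Hc], d as [d Hd]; simpl; intros ->; f_equal; apply proof_irrelevance. Qed.

Lemma S3_ext (c d : S3) : proj1_sig c = proj1_sig d -> c = d.
Proof. destruct c as [c Hc], d as [d Hd]; simpl; intros ->; f_equal; apply proof_irrelevance. Qed.

Definition rep_sig (c : RChar) := constructive_indefinite_description _ (proj2_sig c).
Definition rep_of (c : RChar) : T6 := proj1_sig (rep_sig c).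
Lemma rep_of_spec c : Rep (rep_of c) /\ proj1_sig c = cls (rep_of c).
Proof. exact (proj2_sig (rep_sig c)). Qed.

Definition psi (c : RChar) : S3 := exist _ (F (rep_of c)) (F_S3 _ (proj1 (rep_of_spec c))).

Lemma psi_spec c q : proj1_sig c q -> proj1_sig (psi c) = F q.
Proof.
  intros H. simpl. destruct (rep_of_spec c) as [_ E]. rewrite E in H.
  symmetry; apply F_equiv; exact H.
Qed.

Definition phi (z : S3) : RChar :=
  clsR (tupleOf (fst (proj1_sig z)) (snd (proj1_sig z))) (Rep_tuple _ _ (proj2_sig z)).

Lemma Mdist_refl X : Mdist X X = 0.
Proof. unfold Mdist, Cdist; rewrite !Rminus_diag, !Rabs_R0; ring. Qed.

Lemma Cdist_oc z w : Cdist (Copp (Cconj z)) (Copp (Cconj w)) = Cdist z w.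
Proof.
  destruct z as [x y], w as [x' y']; unfold Cdist; cbn [Copp Cconj fst snd].
  replace (- x - - x') with (- (x - x')) by ring. rewrite Rabs_Ropp.
  replace (- - y - - - y') with (y - y') by ring. reflexivity.
Qed.

Lemma Cdist_c z w : Cdist (Cconj z) (Cconj w) = Cdist z w.
Proof.
  destruct z as [x y], w as [x' y']; unfold Cdist; cbn [Cconj fst snd].
  replace (- y - - y') with (- (y - y')) by ring. rewrite Rabs_Ropp. reflexivity.
Qed.

Lemma tuple_dist z1 z2 w1 w2 :
  T6dist (tupleOf z1 z2) (tupleOf w1 w2) = 2 * (Cdist z1 w1 + Cdist z2 w2).
Proof.
  unfold T6dist, tupleOf; cbn [tA tB ta tb th tw]. rewrite !Mdist_refl.
  unfold Mdist; cbn [m11 m12 m21 m22]. rewrite Cdist_oc, Cdist_c. ring.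
Qed.

Lemma noncomm : Mmul iSigmaZ iSigmaX <> Mmul iSigmaX iSigmaZ.
Proof.
  intros H. apply (f_equal (fun M => fst (m12 M))) in H.
  cbn [Mmul iSigmaZ iSigmaX Cadd Cmul Copp C0 Ci m11 m12 m21 m22 fst snd] in H. lra.
Qed.

Theorem mainTheorem6 :
  (exists phi : S3 -> RChar,
      (forall z : S3,
          proj1_sig (phi z) = cls (tupleOf (fst (proj1_sig z)) (snd (proj1_sig z))))
      /\ homeomorphism phi)
  /\ (forall (c : RChar) (p : T6), proj1_sig c p -> ~ abelianT p).
Proof.
  split.
  - exists phi. split; [intros; reflexivity|]. exists psi. split; [|split; [|split]].
    + intros z. apply S3_ext.
      rewrite (psi_spec (phi z) _ (conjEquiv_refl _)), F_tuple.
      destruct z as [[z1 z2] Hz]; reflexivity.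
    + intros c. apply RChar_ext.
      destruct (rep_of_spec c) as [Hr E].
      destruct (normal_form _ Hr) as [g [z1 [z2 [Hg [Hn Er]]]]].
      assert (FE : F (rep_of c) = (z1, z2)) by (rewrite Er, F_inv, F_tuple by exact Hg; reflexivity).
      unfold phi, clsR, psi; cbn [proj1_sig]. rewrite FE, E; cbn [fst snd].
      apply cls_eq. rewrite Er. exists g; split; [exact Hg | reflexivity].
    + intros S HS z Hz.
      destruct z as [[z1 z2] Hzn]; cbn [proj1_sig fst snd] in *.
      assert (Rz := Rep_tuple z1 z2 Hzn).
      destruct (HS (tupleOf z1 z2) Rz) as [eps [He Hq]].
      { split; [exact Rz|]. exists (phi (exist _ (z1, z2) Hzn)). split; [exact Hz | apply conjEquiv_refl]. }
      exists (eps / 2); split; [lra|]. intros [[w1 w2] Hwn] Hw.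
      unfold S3dist in Hw; cbn [proj1_sig fst snd] in Hw.
      assert (Rw := Rep_tuple w1 w2 Hwn).
      destruct (Hq (tupleOf w1 w2) Rw) as [_ [c [Sc Hc]]].
      { rewrite tuple_dist; lra. }
      replace (phi (exist _ (w1, w2) Hwn)) with c; [exact Sc|].
      apply RChar_ext. destruct c as [P [r [Hr EP]]]; cbn [proj1_sig] in *. subst P.
      apply cls_eq; exact Hc.
    + intros U HU. unfold openRChar, openRep. intros p Hp [_ [c [Uc Hc]]].
      destruct (HU (psi c) Uc) as [eps [He Hw]].
      destruct F_lip as [K [HK L]].
      exists (eps / (K + 1)). split; [apply Rdiv_lt_0_compat; lra|].
      intros q Hq Hd. split; [exact Hq|]. exists (clsR q Hq). split; [| apply conjEquiv_refl].
      apply Hw. unfold S3dist.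
      rewrite (psi_spec c p Hc), (psi_spec (clsR q Hq) q (conjEquiv_refl q)).
      eapply Rle_lt_trans; [apply L; assumption|].
      pose proof (T6dist_pos p q).
      assert (H' : (K + 1) * T6dist p q < (K + 1) * (eps / (K + 1))) by (apply Rmult_lt_compat_l; lra).
      replace ((K + 1) * (eps / (K + 1))) with eps in H' by (field; lra).
      nra.
  - intros [P [r [Hr EP]]] p Hp Hab. cbn [proj1_sig] in Hp. subst P.
    destruct Hp as [g [Hg ->]].
    destruct (normal_form r Hr) as [g' [z1 [z2 [Hg' [Hn ->]]]]].
    rewrite conjT_comp in Hab. set (G := Mmul g g') in *.
    assert (HG : SU2 G) by (apply SU2_mul; assumption).
    assert (C := Hab (ta (conjT G (tupleOf z1 z2))) (th (conjT G (tupleOf z1 z2)))).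
    cbn [conjT tupleOf ta th List.In] in C.
    specialize (C ltac:(tauto) ltac:(tauto)).
    rewrite !conjM_mul in C by exact HG.
    apply noncomm.
    assert (Inv : forall X, conjM (Madj G) (conjM G X) = X).
    { intros X. rewrite conjM_comp, SU2_adj_l by exact HG. apply conjM_id. }
    rewrite <- (Inv (Mmul iSigmaZ iSigmaX)), <- (Inv (Mmul iSigmaX iSigmaZ)), C. reflexivity.
Qed.
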